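(* Let $m,n,p,c$ be positive integers. The number of lattice paths from $(0,0)$ to $(m-pn,m+n)$ using the steps $(1,1)$ and $(-p,1)$ in the plane that do not intersect the line $x=c$ equals $|\mathcal{L}_{p,c+pn-m}(0,0;n,m)|$, the number of lattice paths from $(0,0)$ to $(n,m)$ with unit steps $(1,0)$ and $(0,1)$ that stay strictly above the line $y=px-(c+pn-m)$.
   Context: A path with steps $(1,1)$ and $(-p,1)$ is regarded as the polygonal curve formed by its steps; it intersects the line $x=c$ if it touches or crosses that line. A path with steps $(1,0),(0,1)$ stays strictly above the line $y=px-v$ if every lattice point $(x,y)$ on it satisfies $y>px-v$. *)

(* Defs.v *)
From mathcomp Require Import all_boot all_order all_algebra.
Set Implicit Arguments. Unset Strict Implicit. Unset Printing Implicit Defensive.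
Import Order.TTheory GRing.Theory Num.Theory.
Local Open Scope ring_scope.

(* ---------- Paths with steps (1,1) and (-p,1) ----------
   A path is a sequence of steps s : seq bool, true = (1,1), false = (-p,1).
   Its k-th vertex (0 <= k <= size s) is (xA p s k, k). *)
Definition xA (p : nat) (s : seq bool) (k : nat) : int :=
  (count id (take k s))%:Z - (p * count negb (take k s))%:Z.

(* The polygonal curve meets the vertical line x = c iff some step segment
   [v_i, v_{i+1}] has c between the x-coordinates of its endpoints
   (touching or crossing). *)
Definition meets_vline (p : nat) (c : int) (s : seq bool) : bool :=
  [exists i : 'I_(size s),
     ((xA p s i <= c) && (c <= xA p s i.+1))
  || ((xA p s i.+1 <= c) && (c <= xA p s i))].

Definition xE (s : seq bool) (k : nat) : int := (count id (take k s))%:Z.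
Definition yE (s : seq bool) (k : nat) : int := (count negb (take k s))%:Z.

Definition strictly_above (p : nat) (v : int) (s : seq bool) : bool :=
  [forall k : 'I_(size s).+1, yE s k > p%:Z * xE s k - v].

(* Main.v *)
Require Import Defs.
From mathcomp Require Import all_boot all_order all_algebra.
From mathcomp Require Import zify.
Import Order.TTheory GRing.Theory Num.Theory.
Local Open Scope ring_scope.

Lemma countA (s : seq bool) k : count id (take k s) + count negb (take k s) = size (take k s).
Proof. by rewrite -(count_predC id). Qed.

Lemma xA_step p s k : (k < size s)%N -> xA p s k.+1 <= xA p s k + 1.
Proof.
move=> ks; rewrite /xA (take_nth false ks) -cats1 !count_cat /=.
case: (nth false s k) => /=; lia.
Qed.

Lemma noMeetE p c (s : seq bool) : (0 < c)%N ->
  ~~ meets_vline p c%:Z s = [forall k : 'I_(size s).+1, xA p s k < c%:Z].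
Proof.
move=> c0; apply/idP/idP.
- move=> nm; apply/forallP => -[k kl0] /=.
  have : (k <= size s)%N by rewrite -ltnS.
  elim: k {kl0} => [|k IH] kl.
    by rewrite /xA take0 /=; lia.
  have := IH (ltnW kl); have := @xA_step p s k kl.
  move: nm; rewrite /meets_vline negb_exists => /forallP /(_ (Ordinal kl)) /=.
  lia.
- move/forallP => H; rewrite /meets_vline negb_exists; apply/forallP => -[i il] /=.
  have h1 := H (Ordinal (ltnW (il : (i.+1 < (size s).+1)%N))); have h2 := H (Ordinal (il : (i.+1 < (size s).+1)%N)).
  move: h1 h2 => /= h1 h2; lia.
Qed.
Lemma cnt_split (f : pred bool) s j : (count f (take j s) + count f (drop j s))%N = count f s.
Proof. by rewrite -count_cat cat_take_drop. Qed.

Lemma xE_rev s k : xE (rev (map negb s)) k = (count negb (drop (size s - k) s))%:Z.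
Proof.
by rewrite /xE take_rev size_map count_rev -map_drop count_map.
Qed.

Lemma yE_rev s k : yE (rev (map negb s)) k = (count id (drop (size s - k) s))%:Z.
Proof.
rewrite /yE take_rev size_map count_rev -map_drop count_map; congr (_%:Z).
by apply: eq_count => x /=; rewrite negbK.
Qed.

Lemma key p c m n (s : seq bool) : size s = (m+n)%N -> (0<c)%N ->
 ((xA p s (m+n) == m%:Z - (p*n)%:Z) && ~~ meets_vline p c%:Z s) =
 ((xE (rev (map negb s)) (n+m) == n%:Z) && (yE (rev (map negb s)) (n+m) == m%:Z)
   && strictly_above p (c%:Z + (p*n)%:Z - m%:Z) (rev (map negb s))).
Proof.
move=> sz c0; rewrite noMeetE // /strictly_above size_rev size_map.
have e1 : xA p s (m+n) = (count id s)%:Z - (p * count negb s)%:Z.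
  by rewrite /xA take_oversize ?sz.
have ab := count_predC id s.
have ab' : (count id s + count negb s)%N = size s by [].
rewrite e1 xE_rev yE_rev sz (addnC n m) subnn drop0.
have [am|am] := eqVneq (count id s) m.
- have bn : count negb s = n by lia.
  rewrite am bn !eqxx /=.
  apply/forallP/forallP => H k.
  + have kl : (m + n - k < (m+n).+1)%N by lia.
    have := H (Ordinal kl) => /=.
    rewrite xE_rev yE_rev sz /xA.
    have h1 := cnt_split id s (m + n - k); have h2 := cnt_split negb s (m + n - k).
    have h3 : (p * count negb (take (m + n - k) s) + p * count negb (drop (m + n - k) s) = p * n)%N
      by rewrite -mulnDr h2 bn.
    lia.
  + have kl : (m + n - k < (m+n).+1)%N by lia.
    have := H (Ordinal kl) => /=.
    rewrite xE_rev yE_rev sz /xA.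
    have hk : (m + n - (m + n - k))%N = k by have := ltn_ord k; lia.
    rewrite hk.
    have h1 := cnt_split id s k; have h2 := cnt_split negb s k.
    have h3 : (p * count negb (take k s) + p * count negb (drop k s) = p * n)%N
      by rewrite -mulnDr h2 bn.
    lia.
- have bn : count negb s != n by lia.
  have : (count id s)%:Z - (p * count negb s)%:Z != m%:Z - (p * n)%:Z.
    apply/eqP => E; have : (count id s - m = p * (n - count negb s))%N \/ True by right.
    move=> _; nia.
  move/negbTE => ->; rewrite /=.
  suff -> : ((count negb s)%:Z == n%:Z) = false by [].
  by apply/negbTE; lia.
Qed.
Definition rn (s : seq bool) := rev (map negb s).
Lemma rnK : involutive rn.
Proof. by move=> s; rewrite /rn map_rev revK -map_comp map_id_in // => x _ /=; rewrite negbK. Qed.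
Lemma size_rn s : size (rn s) = size s.
Proof. by rewrite /rn size_rev size_map. Qed.

Theorem theorem3p1 (m n p c : nat) :
  (0 < m)%N -> (0 < n)%N -> (0 < p)%N -> (0 < c)%N ->
  #|[set s : (m + n).-tuple bool |
      (xA p s (m + n) == m%:Z - (p * n)%:Z) && ~~ meets_vline p c%:Z s]|
  = #|[set s : (n + m).-tuple bool |
      (xE s (n + m) == n%:Z) && (yE s (n + m) == m%:Z) &&
      strictly_above p (c%:Z + (p * n)%:Z - m%:Z) s]|.
Proof.
move=> _ _ _ c0.
have szf (s : (m+n).-tuple bool) : size (rn s) == (n + m)%N by rewrite size_rn size_tuple addnC.
have szg (s : (n+m).-tuple bool) : size (rn s) == (m + n)%N by rewrite size_rn size_tuple addnC.
pose f s : (n+m).-tuple bool := Tuple (szf s).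
pose g s : (m+n).-tuple bool := Tuple (szg s).
have fK : cancel f g by move=> s; apply: val_inj; rewrite /= rnK.
have gK : cancel g f by move=> s; apply: val_inj; rewrite /= rnK.
rewrite -(card_imset _ (can_inj fK)); apply: eq_card => t.
rewrite (can2_imset_pre _ fK gK) !inE /=.
rewrite key ?size_rn ?size_tuple ?(addnC n m) //.
by rewrite -/(rn (rn t)) rnK.
Qed.
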